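(* Let $X\in\mathbb{R}^{d\times m}$ and $Y\in\mathbb{R}^{d\times n}$ satisfy $\mathrm{Span}(X)\cap\mathrm{Span}(Y)=\{0\}$. Then $$u^\intercal(XX^\intercal+YY^\intercal)^\dagger v=\begin{cases}u^\intercal(XX^\intercal)^\dagger v,& u,v\in\mathrm{Span}(X),\\ 0,& u\in\mathrm{Span}(X),\ v\in\mathrm{Span}(Y),\\ u^\intercal(YY^\intercal)^\dagger v,& u,v\in\mathrm{Span}(Y).\end{cases}$$
   Context: $\mathrm{Span}(X)$ is the column space of $X$; $A^\dagger$ is the Moore–Penrose pseudo-inverse. *)

(* Defs.v *)
From HB Require Import structures.
From mathcomp Require Import all_boot all_order all_algebra.
From mathcomp Require Import boolp classical_sets reals.
Set Implicit Arguments. Unset Strict Implicit. Unset Printing Implicit Defensive.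
Import Order.TTheory GRing.Theory Num.Theory.
Local Open Scope ring_scope.

Definition is_mp_pinv (R : realType) (m n : nat)
  (A : 'M[R]_(m, n)) (B : 'M[R]_(n, m)) : Prop :=
  [/\ A *m B *m A = A, B *m A *m B = B,
      (A *m B)^T = A *m B & (B *m A)^T = B *m A].

(* The Moore-Penrose pseudo-inverse A^dagger: the (unique, existing) matrix
   satisfying the Penrose conditions, selected by classical choice. *)
Definition mp_pinv (R : realType) (m n : nat) (A : 'M[R]_(m, n)) : 'M[R]_(n, m) :=
  xget 0 [set B | is_mp_pinv A B].

(* u \in Span(X), Span(X) = column space of X, i.e. u^T lies in the
   row space of X^T. *)
Definition in_span (R : realType) (d m : nat) (X : 'M[R]_(d, m)) (u : 'cV[R]_d) : bool :=
  (u^T <= X^T)%MS.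

(* Main.v *)
Require Import Defs.
From HB Require Import structures.
From mathcomp Require Import all_boot all_order all_algebra.
From mathcomp Require Import boolp classical_sets reals.
Import Order.TTheory GRing.Theory Num.Theory.
Local Open Scope ring_scope.

Section Helpers.
Set Implicit Arguments.
Unset Strict Implicit.

Lemma trK0 (R : realType) p q (K : 'M[R]_(p,q)) : K^T *m K = 0 -> K = 0.
Proof.
move=> H; apply/matrixP=> i j.
have := congr1 (fun N : 'M[R]_q => N j j) H; rewrite !mxE.
under eq_bigr do rewrite mxE.
move=> Hs.
have /eqP : K i j * K i j = 0.
  by apply: (psumr_eq0P (P := xpredT) _ Hs) => // k _; rewrite -expr2 sqr_ge0.
by rewrite mulf_eq0 orbb => /eqP ->; rewrite ?mxE.
Qed.

Lemma cancelXl (R : realType) d m k (X : 'M[R]_(d,m)) (W : 'M[R]_(d,k)) :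
  X *m X^T *m W = 0 -> X^T *m W = 0.
Proof.
move=> H; apply: trK0.
by rewrite trmx_mul trmxK mulmxA -(mulmxA W^T) -mulmxA H mulmx0.
Qed.

Lemma cancelXr (R : realType) d m k (X : 'M[R]_(d,m)) (W : 'M[R]_(k,d)) :
  W *m (X *m X^T) = 0 -> W *m X = 0.
Proof.
move=> H; apply: trmx_inj; rewrite trmx_mul trmx0; apply: cancelXl.
by rewrite -{1}(trmxK X) -trmx_mul -trmx_mul H trmx0.
Qed.

Lemma mp_factor (R : realType) m n r (F : 'M[R]_(m,r)) (G : 'M[R]_(r,n)) :
  row_free F^T -> row_free G ->
  is_mp_pinv (F *m G) (G^T *m invmx (G *m G^T) *m invmx (F^T *m F) *m F^T).
Proof.
move=> fF fG.
have uF : F^T *m F \in unitmx.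
  rewrite -row_free_unit; apply: inj_row_free => v Hv.
  have : v *m F^T = 0.
    apply: trmx_inj; rewrite trmx0; apply: trK0.
    by rewrite trmxK trmx_mul trmxK mulmxA -(mulmxA v) Hv mul0mx.
  by move/eqP; rewrite mulmx_free_eq0 // => /eqP.
have uG : G *m G^T \in unitmx.
  rewrite -row_free_unit; apply: inj_row_free => v Hv.
  have : v *m G = 0.
    apply: trmx_inj; rewrite trmx0; apply: trK0.
    by rewrite trmxK trmx_mul mulmxA -(mulmxA v) Hv mul0mx.
  by move/eqP; rewrite mulmx_free_eq0 // => /eqP.
have hQ : forall k (Z : 'M_(k,_)), Z *m G *m G^T *m invmx (G *m G^T) = Z.
  by move=> k Z; rewrite -!mulmxA (mulmxA G) mulmxV ?mulmx1.
have hP' : forall k (Z : 'M_(k,_)), Z *m invmx (F^T *m F) *m F^T *m F = Z.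
  by move=> k Z; rewrite -!mulmxA mulVmx ?mulmx1.
have sP : (invmx (F^T *m F))^T = invmx (F^T *m F) by rewrite trmx_inv trmx_mul trmxK.
have sQ : (invmx (G *m G^T))^T = invmx (G *m G^T) by rewrite trmx_inv trmx_mul trmxK.
have AB : F *m G *m (G^T *m invmx (G *m G^T) *m invmx (F^T *m F) *m F^T)
   = F *m invmx (F^T *m F) *m F^T.
  by rewrite !mulmxA hQ.
have BA : G^T *m invmx (G *m G^T) *m invmx (F^T *m F) *m F^T *m (F *m G)
   = G^T *m invmx (G *m G^T) *m G.
  by rewrite !mulmxA hP'.
split.
- by rewrite AB !mulmxA hP'.
- by rewrite BA !mulmxA hQ.
- by rewrite AB !trmx_mul trmxK sP !mulmxA.
- by rewrite BA !trmx_mul trmxK sQ !mulmxA.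
Qed.

Lemma mp_exists (R : realType) m n (A : 'M[R]_(m,n)) : is_mp_pinv A (mp_pinv A).
Proof.
rewrite /mp_pinv; apply: xgetPex.
have fF : row_free (col_base A)^T by rewrite /row_free mxrank_tr; exact: col_base_full.
have := mp_factor fF (row_base_free A); rewrite mulmx_base => h.
by eexists; exact: h.
Qed.

Lemma disj (R : realType) d m n k (X : 'M[R]_(d,m)) (Y : 'M[R]_(d,n))
  (hXY : forall w : 'cV[R]_d, in_span X w -> in_span Y w -> w = 0)
  (W : 'M[R]_(d,k)) : (W^T <= X^T)%MS -> (W^T <= Y^T)%MS -> W = 0.
Proof.
move=> hX hY; apply/matrixP => i j.
have := hXY (col j W); rewrite /in_span tr_col.
move=> /(_ (submx_trans (row_sub _ _) hX) (submx_trans (row_sub _ _) hY)).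
by move/matrixP/(_ i 0); rewrite !mxE.
Qed.

Lemma core (R : realType) d m n (X : 'M[R]_(d,m)) (Y : 'M[R]_(d,n)) (S : 'M[R]_d)
  (hXY : forall w : 'cV[R]_d, in_span X w -> in_span Y w -> w = 0)
  (hS : (X *m X^T + Y *m Y^T) *m S *m (X *m X^T + Y *m Y^T) = X *m X^T + Y *m Y^T) :
  X^T *m S *m Y = 0 /\ X^T *m S *m X *m X^T = X^T.
Proof.
set M := X *m X^T + Y *m Y^T in hS *.
have hYX : forall w : 'cV[R]_d, in_span Y w -> in_span X w -> w = 0.
  by move=> w a b; exact: hXY.
have E0 : X *m X^T *m (S *m M - 1%:M) + Y *m Y^T *m (S *m M - 1%:M) = 0.
  by rewrite -mulmxDl mulmxBr mulmx1 mulmxA hS subrr.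
have AE : X *m X^T *m (S *m M - 1%:M) = 0.
  apply: (disj hXY).
    by rewrite !trmx_mul trmxK mulmxA submxMl.
  move/eqP: E0; rewrite addr_eq0 => /eqP ->.
  by rewrite -mulmxA -mulmxN trmx_mul submxMl.
have h1 : X^T *m S *m M = X^T.
  by apply/eqP; rewrite -subr_eq0 -mulmxA -{2}(mulmx1 X^T) -mulmxBr (cancelXl AE).
have F0 : (M *m S - 1%:M) *m (X *m X^T) + (M *m S - 1%:M) *m (Y *m Y^T) = 0.
  by rewrite -mulmxDr mulmxBl mul1mx hS subrr.
have FA : (M *m S - 1%:M) *m (X *m X^T) = 0.
  apply: trmx_inj; rewrite trmx0; apply: (disj hXY).
    by rewrite trmxK mulmxA submxMl.
  move/eqP: F0; rewrite addr_eq0 => /eqP ->.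
  by rewrite trmxK mulmxA -mulNmx submxMl.
have FB : (M *m S - 1%:M) *m (Y *m Y^T) = 0.
  by move/eqP: F0; rewrite FA add0r => /eqP.
have h3 : M *m S *m Y = Y.
  by apply/eqP; rewrite -subr_eq0 -{2}(mul1mx Y) -mulmxBl (cancelXr FB).
have h3' : X *m X^T *m S *m Y + Y *m Y^T *m S *m Y = Y.
  by move: h3; rewrite /M !mulmxDl.
have eW : X *m X^T *m (S *m Y) = Y *m (1%:M - Y^T *m S *m Y).
  rewrite mulmxBr mulmx1 !mulmxA; apply/eqP; rewrite eq_sym subr_eq; apply/eqP.
  by rewrite h3'.
have W0 : X *m X^T *m (S *m Y) = 0.
  apply: (disj hXY).
    by rewrite !trmx_mul trmxK mulmxA submxMl.
  by rewrite eW trmx_mul submxMl.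
have h2 : X^T *m S *m Y = 0 by rewrite -mulmxA (cancelXl W0).
split => //.
by move: h1; rewrite /M mulmxDr !mulmxA h2 mul0mx addr0.
Qed.


Lemma span_eq (R : realType) d m (X : 'M[R]_(d,m)) (u : 'cV[R]_d) :
  in_span X u -> exists p : 'M[R]_(1,m), u = X *m p^T.
Proof.
by case/submxP => p hp; exists p; rewrite -(trmxK u) hp trmx_mul trmxK.
Qed.

Lemma caseXX (R : realType) d m n (X : 'M[R]_(d,m)) (Y : 'M[R]_(d,n)) (S : 'M[R]_d)
  (hXY : forall w : 'cV[R]_d, in_span X w -> in_span Y w -> w = 0)
  (hS : (X *m X^T + Y *m Y^T) *m S *m (X *m X^T + Y *m Y^T) = X *m X^T + Y *m Y^T)
  (u v : 'cV[R]_d) : in_span X u -> in_span X v ->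
  u^T *m S *m v = u^T *m mp_pinv (X *m X^T) *m v.
Proof.
move=> /span_eq [p ->] /span_eq [q ->].
have [_ h4] := core hXY hS.
have [hA _ _ _] := mp_exists (X *m X^T).
set A' := mp_pinv _ in hA *.
have hX : X *m X^T *m A' *m X = X.
  have : (X *m X^T *m A' - 1%:M) *m X = 0.
    by apply: cancelXr; rewrite mulmxBl mul1mx hA subrr.
  by move/eqP; rewrite mulmxBl mul1mx subr_eq0 => /eqP.
have h4' : forall k (Z : 'M_(k,m)), Z *m X^T *m S *m X *m X^T = Z *m X^T.
  by move=> k Z; rewrite -!mulmxA; congr (_ *m _); rewrite !mulmxA h4.
have eX : X *m q^T = X *m X^T *m A' *m X *m q^T by rewrite hX.
rewrite !trmx_mul !trmxK {1}eX !mulmxA h4'.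
by rewrite -!mulmxA.
Qed.

Lemma caseXY (R : realType) d m n (X : 'M[R]_(d,m)) (Y : 'M[R]_(d,n)) (S : 'M[R]_d)
  (hXY : forall w : 'cV[R]_d, in_span X w -> in_span Y w -> w = 0)
  (hS : (X *m X^T + Y *m Y^T) *m S *m (X *m X^T + Y *m Y^T) = X *m X^T + Y *m Y^T)
  (u v : 'cV[R]_d) : in_span X u -> in_span Y v -> u^T *m S *m v = 0.
Proof.
move=> /span_eq [p ->] /span_eq [q ->].
have [h2 _] := core hXY hS.
rewrite !trmx_mul !trmxK !mulmxA -(mulmxA p) -(mulmxA p) h2.
by rewrite mulmx0 mul0mx.
Qed.

End Helpers.

Theorem lemma18 (R : realType) (d m n : nat)
  (X : 'M[R]_(d, m)) (Y : 'M[R]_(d, n))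
  (hXY : forall w : 'cV[R]_d, in_span X w -> in_span Y w -> w = 0) :
  let S := mp_pinv (X *m X^T + Y *m Y^T) in
  [/\ (forall u v : 'cV[R]_d, in_span X u -> in_span X v ->
         u^T *m S *m v = u^T *m mp_pinv (X *m X^T) *m v),
      (forall u v : 'cV[R]_d, in_span X u -> in_span Y v ->
         u^T *m S *m v = 0)
    & (forall u v : 'cV[R]_d, in_span Y u -> in_span Y v ->
         u^T *m S *m v = u^T *m mp_pinv (Y *m Y^T) *m v)].
Proof.
move=> S.
have [hS _ _ _] := mp_exists (X *m X^T + Y *m Y^T).
have hYX : forall w : 'cV[R]_d, in_span Y w -> in_span X w -> w = 0.
  by move=> w a b; exact: hXY.
have hS' : (Y *m Y^T + X *m X^T) *m S *m (Y *m Y^T + X *m X^T) = Y *m Y^T + X *m X^T.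
  by rewrite [Y *m Y^T + _]addrC.
split.
- exact: caseXX hXY hS.
- exact: caseXY hXY hS.
- exact: caseXX hYX hS'.
Qed.
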